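(* In any history sequence of the Lazy Set algorithm, every state is normal (i.e. satisfies NS1–NS5 of the context).
   Context: Lazy Set algorithm. A fixed countably infinite set $A$ of addresses contains distinguished $\mathsf H,\mathsf T$. A state $S$ consists of: predicates $\mathrm{Active}^S,\mathrm{Marked}^S\subseteq A$; functions $\mathrm{Next}^S:A\to A\cup\{\bot\}$, $\mathrm{Val}^S:A\to\mathbb N\cup\{-1,\infty,\bot\}$, $\mathrm{LockedTo}^S:A\to\{\text{processes}\}\cup\{\bot\}$; for each process $P$ local variables $\mathrm{pred}_P,\mathrm{curr}_P,d_P\in A$, $x_P\in\mathbb N$, and a program counter $PC_P$. Code of process $P$ (line numbers are the $PC$ values): line 0: pick $x\in\mathbb N$ and go to 1.1, 2.1 or 3.1. Success condition $SC\equiv\neg\mathrm{Marked}(\mathrm{pred})\wedge\mathrm{Next}(\mathrm{pred})=\mathrm{curr}$. Procedure locate$(x)$, lines L1: $\mathrm{curr}:=\mathsf H$; L2: repeat; L3.1: $\mathrm{pred}:=\mathrm{curr}$; L3.2: $\mathrm{curr}:=\mathrm{Next}(\mathrm{curr})$; L4: until $\mathrm{Val}(\mathrm{curr})\ge x$; L5: return $(\mathrm{pred},\mathrm{curr})$ to the caller. ADD$(x)$: 1.1 $(\mathrm{pred},\mathrm{curr}):=$locate$(x)$; 1.2 lock pred; 1.3 if $\neg SC$ then unlock pred and return $f$; 1.4 if $\mathrm{Val}(\mathrm{curr})=x$ then unlock pred and return $1$; 1.5 activation: choose $a\notin\mathrm{Active}$, make it active with $\mathrm{Val}(a)=x$,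 $\mathrm{Next}(a)=\mathrm{curr}$, and set $\mathrm{Next}(\mathrm{pred}):=a$ (nothing else changes); 1.6 unlock pred, return $0$. REMOVE$(x)$: 2.1 $(\mathrm{pred},\mathrm{curr}):=$locate$(x)$; 2.2 lock pred; 2.3 if $\neg SC$ then unlock pred, return $f$; 2.4 if $\mathrm{Val}(\mathrm{curr})>x$ then unlock pred, return $0$; 2.5 lock curr, $d:=\mathrm{Next}(\mathrm{curr})$; 2.6 $\mathrm{Marked}(\mathrm{curr}):=$ true; 2.7 $\mathrm{Next}(\mathrm{pred}):=d$ (physical removal); 2.8 unlock curr and pred, return $1$. CONTAINS$(x)$: 3.1 $\mathrm{curr}:=\mathsf H$; 3.2 repeat; 3.3 $\mathrm{curr}:=\mathrm{Next}(\mathrm{curr})$; 3.4 until $\mathrm{Val}(\mathrm{curr})\ge x$; 3.5 return $1$ if $\mathrm{Val}(\mathrm{curr})=x$ else $0$. Returns set $PC_P:=0$. Each line is executed as an atomic step; a lock of address $a$ by $P$ is enabled only if $\mathrm{LockedTo}(a)=\bot$ and sets $\mathrm{LockedTo}(a)=P$; unlock sets it to $\bot$; the test at 1.3/2.3 reads $\mathrm{Marked}(\mathrm{pred})$ and $\mathrm{Next}(\mathrm{pred})$. Initial state: $\mathrm{Active}=\{\mathsf H,\mathsf T\}$, $\mathrm{Marked}=\emptyset$, $\mathrm{Next}(\mathsf H)=\mathsf T$, $\mathrm{Next}(\mathsf T)=\bot$, $\mathrm{Next}(a)=a$ otherwise, $\mathrm{Val}(\mathsf H)=-1$, $\mathrm{Val}(\mathsf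 T)=\infty$, $\mathrm{Val}=\bot$ otherwise, all unlocked, $\mathrm{pred}_P=\mathsf H$, $\mathrm{curr}_P=\mathsf T$, $PC_P=0$. A history sequence is $(S_0,e_0,S_1,\dots)$ with $S_0$ initial and each $(S_i,e_i,S_{i+1})$ a step of some process. A path is a sequence of distinct addresses $a_1,\dots,a_n$, $n>1$, with $a_i\ne\mathsf T$ and $\mathrm{Next}(a_i)=a_{i+1}$ for $i<n$; the main branch is the path from $\mathsf H$ to $\mathsf T$. $S$ is normal if for every process $P$ (writing pred, curr, $x$ for $\mathrm{pred}_P,\mathrm{curr}_P,x_P$): NS1: $\mathsf H,\mathsf T$ are active with $\mathrm{Val}(\mathsf H)=-1$, $\mathrm{Val}(\mathsf T)=\infty$; every active $a\notin\{\mathsf H,\mathsf T\}$ has $\mathrm{Val}(a)\in\mathbb N$; for active $a\ne\mathsf T$, $\mathrm{Next}(a)$ is active and $\mathrm{Val}(a)<\mathrm{Val}(\mathrm{Next}(a))$; pred and curr are active; there are finitely many active addresses; and the relation ''there is a path from $a$ to $b$'' on active addresses has no loops (a tree with root $\mathsf T$). NS2: $a$ is active iff $a$ is on the main branch or $\mathrm{Marked}(a)$. NS3: if $PC_P\in\{L2,L3.1\}$ then $\mathrm{Val}(\mathrm{curr})<x$; if $PC_P=L3.2$ then $\mathrm{pred}=\mathrm{curr}$ and $\mathrm{Val}(\mathrm{pred})<x$; if $PC_P=L4$ then $\mathrm{Val}(\mathrm{pred})<\mathrm{Val}(\mathrm{curr})$ and $\mathrm{Val}(\mathrm{pred})<x$;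 if $PC_P=L5$ then $\mathrm{Val}(\mathrm{pred})<x\le\mathrm{Val}(\mathrm{curr})$. NS4: if $PC_P\in\{1.2,1.3,1.4\}$ then $\mathrm{Val}(\mathrm{pred})<x\le\mathrm{Val}(\mathrm{curr})$; if $PC_P=1.5$ then $\mathrm{Val}(\mathrm{pred})<x<\mathrm{Val}(\mathrm{curr})$; if $PC_P\in\{1.3,\dots,1.6\}$ then $\mathrm{LockedTo}(\mathrm{pred})=P$; if $PC_P\in\{1.4,1.5\}$ then pred is unmarked and $\mathrm{Next}(\mathrm{pred})=\mathrm{curr}$. NS5: if $PC_P\in\{2.2,2.3,2.4\}$ then $\mathrm{Val}(\mathrm{pred})<x\le\mathrm{Val}(\mathrm{curr})$; if $PC_P\in\{2.5,\dots,2.8\}$ then $\mathrm{Val}(\mathrm{pred})<x=\mathrm{Val}(\mathrm{curr})$; if $PC_P\in\{2.3,\dots,2.8\}$ then $\mathrm{LockedTo}(\mathrm{pred})=P$, and if $PC_P\in\{2.6,2.7,2.8\}$ then $\mathrm{LockedTo}(\mathrm{curr})=P$; if $PC_P\in\{2.4,\dots,2.8\}$ then pred is unmarked, and if $PC_P\in\{2.4,\dots,2.7\}$ then $\mathrm{Next}(\mathrm{pred})=\mathrm{curr}$; if $PC_P=2.7$ then $\mathrm{Marked}(\mathrm{curr})$. *)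

(* Defs.v *)
From Stdlib Require Import Arith List.
Import ListNotations.

(* Addresses: the fixed countably infinite set A is taken to be nat,   *)
Definition Addr := nat.
Definition H : Addr := 0.
Definition T : Addr := 1.

Inductive Val := VNeg | VNat (n : nat) | VInf | VBot .

Definition vlt (u v : Val) : Prop :=
  match u, v with
  | VNeg, VNat _ | VNeg, VInf | VNat _, VInf => True
  | VNat m, VNat n => m < n
  | _, _ => False
  end.
Definition vle (u v : Val) : Prop := vlt u v \/ (u = v /\ u <> VBot).

(* Program counters.  The procedure locate is shared by ADD and REMOVE;
   its program counters remember the caller (the return address). *)
Inductive Caller := CAdd | CRem.
Inductive PC :=
  | L0
  | LL1 (c : Caller) | LL2 (c : Caller) | LL31 (c : Caller) | LL32 (c : Caller)
  | LL4 (c : Caller) | LL5 (c : Caller)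
  | A11 | A12 | A13 | A14 | A15 | A16
  | R21 | R22 | R23 | R24 | R25 | R26 | R27 | R28
  | C31 | C32 | C33 | C34 | C35.

Definition is_locL2_L31 (p : PC) : Prop :=
  exists c, p = LL2 c \/ p = LL31 c.
Definition is_locL32 (p : PC) : Prop := exists c, p = LL32 c.
Definition is_locL4 (p : PC) : Prop := exists c, p = LL4 c.
Definition is_locL5 (p : PC) : Prop := exists c, p = LL5 c.

Section LazySet.
Variable Proc : Type.

Record Shared := mkShared {
  act : Addr -> bool;
  mrk : Addr -> bool;
  nxt : Addr -> option Addr;
  vl  : Addr -> Val;
  lck : Addr -> option Proc
}.

Record Local := mkLocal {
  lpred : Addr; lcurr : Addr; ld : Addr; lx : nat; lpc : PC
}.

Record State := mkState { sh : Shared; loc : Proc -> Local }.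

Definition upd {B : Type} (f : Addr -> B) (a : Addr) (b : B) : Addr -> B :=
  fun y => if Nat.eqb y a then b else f y.

Definition setpc (l : Local) (p : PC) : Local :=
  mkLocal (lpred l) (lcurr l) (ld l) (lx l) p.
Definition setpred (l : Local) (a : Addr) : Local :=
  mkLocal a (lcurr l) (ld l) (lx l) (lpc l).
Definition setcurr (l : Local) (a : Addr) : Local :=
  mkLocal (lpred l) a (ld l) (lx l) (lpc l).
Definition setd (l : Local) (a : Addr) : Local :=
  mkLocal (lpred l) (lcurr l) a (lx l) (lpc l).
Definition setx (l : Local) (x : nat) : Local :=
  mkLocal (lpred l) (lcurr l) (ld l) x (lpc l).

Definition setlck (s : Shared) (f : Addr -> option Proc) : Shared :=
  mkShared (act s) (mrk s) (nxt s) (vl s) f.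
Definition setmrk (s : Shared) (f : Addr -> bool) : Shared :=
  mkShared (act s) f (nxt s) (vl s) (lck s).
Definition setnxt (s : Shared) (f : Addr -> option Addr) : Shared :=
  mkShared (act s) (mrk s) f (vl s) (lck s).

Definition lock (s : Shared) (a : Addr) (P : Proc) : Shared :=
  setlck s (upd (lck s) a (Some P)).
Definition unlock (s : Shared) (a : Addr) : Shared :=
  setlck s (upd (lck s) a None).

Definition SC (s : Shared) (l : Local) : Prop :=
  mrk s (lpred l) = false /\ nxt s (lpred l) = Some (lcurr l).

Inductive lstep (P : Proc) : Shared -> Local -> Shared -> Local -> Prop :=
  | st0 s l x p : lpc l = L0 -> (p = A11 \/ p = R21 \/ p = C31) ->
      lstep P s l s (setpc (setx l x) p)
  | st11 s l : lpc l = A11 -> lstep P s l s (setpc l (LL1 CAdd))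
  | st21 s l : lpc l = R21 -> lstep P s l s (setpc l (LL1 CRem))
  | stL1 s l c : lpc l = LL1 c -> lstep P s l s (setpc (setcurr l H) (LL2 c))
  | stL2 s l c : lpc l = LL2 c -> lstep P s l s (setpc l (LL31 c))
  | stL31 s l c : lpc l = LL31 c ->
      lstep P s l s (setpc (setpred l (lcurr l)) (LL32 c))
  | stL32 s l c b : lpc l = LL32 c -> nxt s (lcurr l) = Some b ->
      lstep P s l s (setpc (setcurr l b) (LL4 c))
  | stL4exit s l c : lpc l = LL4 c -> vle (VNat (lx l)) (vl s (lcurr l)) ->
      lstep P s l s (setpc l (LL5 c))
  | stL4loop s l c : lpc l = LL4 c -> ~ vle (VNat (lx l)) (vl s (lcurr l)) ->
      lstep P s l s (setpc l (LL2 c))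
  | stL5add s l : lpc l = LL5 CAdd -> lstep P s l s (setpc l A12)
  | stL5rem s l : lpc l = LL5 CRem -> lstep P s l s (setpc l R22)
  | st12 s l : lpc l = A12 -> lck s (lpred l) = None ->
      lstep P s l (lock s (lpred l) P) (setpc l A13)
  | st13f s l : lpc l = A13 -> ~ SC s l ->
      lstep P s l (unlock s (lpred l)) (setpc l L0)
  | st13t s l : lpc l = A13 -> SC s l -> lstep P s l s (setpc l A14)
  | st14r s l : lpc l = A14 -> vl s (lcurr l) = VNat (lx l) ->
      lstep P s l (unlock s (lpred l)) (setpc l L0)
  | st14c s l : lpc l = A14 -> vl s (lcurr l) <> VNat (lx l) ->
      lstep P s l s (setpc l A15)
  | st15 s l a : lpc l = A15 -> act s a = false ->
      lstep P s l
        (mkShared (upd (act s) a true) (mrk s)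
                  (upd (upd (nxt s) a (Some (lcurr l))) (lpred l) (Some a))
                  (upd (vl s) a (VNat (lx l))) (lck s))
        (setpc l A16)
  | st16 s l : lpc l = A16 -> lstep P s l (unlock s (lpred l)) (setpc l L0)
  | st22 s l : lpc l = R22 -> lck s (lpred l) = None ->
      lstep P s l (lock s (lpred l) P) (setpc l R23)
  | st23f s l : lpc l = R23 -> ~ SC s l ->
      lstep P s l (unlock s (lpred l)) (setpc l L0)
  | st23t s l : lpc l = R23 -> SC s l -> lstep P s l s (setpc l R24)
  | st24r s l : lpc l = R24 -> vlt (VNat (lx l)) (vl s (lcurr l)) ->
      lstep P s l (unlock s (lpred l)) (setpc l L0)
  | st24c s l : lpc l = R24 -> ~ vlt (VNat (lx l)) (vl s (lcurr l)) ->
      lstep P s l s (setpc l R25)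
  | st25 s l b : lpc l = R25 -> lck s (lcurr l) = None ->
      nxt s (lcurr l) = Some b ->
      lstep P s l (lock s (lcurr l) P) (setpc (setd l b) R26)
  | st26 s l : lpc l = R26 ->
      lstep P s l (setmrk s (upd (mrk s) (lcurr l) true)) (setpc l R27)
  | st27 s l : lpc l = R27 ->
      lstep P s l (setnxt s (upd (nxt s) (lpred l) (Some (ld l)))) (setpc l R28)
  | st28 s l : lpc l = R28 ->
      lstep P s l (unlock (unlock s (lcurr l)) (lpred l)) (setpc l L0)
  | st31 s l : lpc l = C31 -> lstep P s l s (setpc (setcurr l H) C32)
  | st32 s l : lpc l = C32 -> lstep P s l s (setpc l C33)
  | st33 s l b : lpc l = C33 -> nxt s (lcurr l) = Some b ->
      lstep P s l s (setpc (setcurr l b) C34)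
  | st34exit s l : lpc l = C34 -> vle (VNat (lx l)) (vl s (lcurr l)) ->
      lstep P s l s (setpc l C35)
  | st34loop s l : lpc l = C34 -> ~ vle (VNat (lx l)) (vl s (lcurr l)) ->
      lstep P s l s (setpc l C32)
  | st35 s l : lpc l = C35 -> lstep P s l s (setpc l L0).

Definition step (P : Proc) (S S' : State) : Prop :=
  lstep P (sh S) (loc S P) (sh S') (loc S' P) /\
  forall Q, Q <> P -> loc S' Q = loc S Q.

Definition initial (S : State) : Prop :=
  (forall a, act (sh S) a = orb (Nat.eqb a H) (Nat.eqb a T)) /\
  (forall a, mrk (sh S) a = false) /\
  nxt (sh S) H = Some T /\ nxt (sh S) T = None /\
  (forall a, a <> H -> a <> T -> nxt (sh S) a = Some a) /\
  vl (sh S) H = VNeg /\ vl (sh S) T = VInf /\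
  (forall a, a <> H -> a <> T -> vl (sh S) a = VBot) /\
  (forall a, lck (sh S) a = None) /\
  (forall P, lpred (loc S P) = H /\ lcurr (loc S P) = T /\ lpc (loc S P) = L0).

(* A history sequence (S_0, e_0, S_1, ..., S_n) of length n
   (infinite histories are covered by all their finite prefixes). *)
Definition history (n : nat) (H_ : nat -> State) : Prop :=
  initial (H_ 0) /\ forall i, i < n -> exists P, step P (H_ i) (H_ (i + 1)).

Inductive chain (s : Shared) : list Addr -> Prop :=
  | chain_one a : chain s [a]
  | chain_cons a b l : a <> T -> nxt s a = Some b -> chain s (b :: l) ->
      chain s (a :: b :: l).

Definition path (s : Shared) (a b : Addr) : Prop :=
  exists mid, NoDup (a :: mid ++ [b]) /\ chain s (a :: mid ++ [b]).

Definition on_main (s : Shared) (a : Addr) : Prop :=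
  exists mid, NoDup (H :: mid ++ [T]) /\ chain s (H :: mid ++ [T]) /\
              In a (H :: mid ++ [T]).

Definition NS1 (S : State) : Prop :=
  let s := sh S in
  act s H = true /\ act s T = true /\ vl s H = VNeg /\ vl s T = VInf /\
  (forall a, act s a = true -> a <> H -> a <> T -> exists n, vl s a = VNat n) /\
  (forall a, act s a = true -> a <> T ->
     exists b, nxt s a = Some b /\ act s b = true /\ vlt (vl s a) (vl s b)) /\
  (forall P, act s (lpred (loc S P)) = true /\ act s (lcurr (loc S P)) = true) /\
  (exists fin : list Addr, forall a, act s a = true -> In a fin) /\
  (forall a b, act s a = true -> act s b = true -> ~ (path s a b /\ path s b a)) /\
  (forall a, act s a = true -> a <> T -> path s a T).

Definition NS2 (S : State) : Prop :=
  forall a, act (sh S) a = true <-> (on_main (sh S) a \/ mrk (sh S) a = true).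

Definition NS3 (S : State) : Prop :=
  forall P, let s := sh S in let l := loc S P in
  let vp := vl s (lpred l) in let vc := vl s (lcurr l) in let x := VNat (lx l) in
  (is_locL2_L31 (lpc l) -> vlt vc x) /\
  (is_locL32 (lpc l) -> lpred l = lcurr l /\ vlt vp x) /\
  (is_locL4 (lpc l) -> vlt vp vc /\ vlt vp x) /\
  (is_locL5 (lpc l) -> vlt vp x /\ vle x vc).

Definition NS4 (S : State) : Prop :=
  forall P, let s := sh S in let l := loc S P in
  let vp := vl s (lpred l) in let vc := vl s (lcurr l) in let x := VNat (lx l) in
  (In (lpc l) [A12; A13; A14] -> vlt vp x /\ vle x vc) /\
  (lpc l = A15 -> vlt vp x /\ vlt x vc) /\
  (In (lpc l) [A13; A14; A15; A16] -> lck s (lpred l) = Some P) /\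
  (In (lpc l) [A14; A15] ->
     mrk s (lpred l) = false /\ nxt s (lpred l) = Some (lcurr l)).

Definition NS5 (S : State) : Prop :=
  forall P, let s := sh S in let l := loc S P in
  let vp := vl s (lpred l) in let vc := vl s (lcurr l) in let x := VNat (lx l) in
  (In (lpc l) [R22; R23; R24] -> vlt vp x /\ vle x vc) /\
  (In (lpc l) [R25; R26; R27; R28] -> vlt vp x /\ x = vc) /\
  (In (lpc l) [R23; R24; R25; R26; R27; R28] -> lck s (lpred l) = Some P) /\
  (In (lpc l) [R26; R27; R28] -> lck s (lcurr l) = Some P) /\
  (In (lpc l) [R24; R25; R26; R27; R28] -> mrk s (lpred l) = false) /\
  (In (lpc l) [R24; R25; R26; R27] -> nxt s (lpred l) = Some (lcurr l)) /\
  (lpc l = R27 -> mrk s (lcurr l) = true).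

Definition normal (S : State) : Prop :=
  NS1 S /\ NS2 S /\ NS3 S /\ NS4 S /\ NS5 S.

End LazySet.

Arguments step {Proc}.
Arguments history {Proc}.
Arguments normal {Proc}.

(* Main.v *)
Require Import Defs.
From Stdlib Require Import Arith List Lia Classical.
Import ListNotations.

Local Arguments act {Proc}. Local Arguments mrk {Proc}. Local Arguments nxt {Proc}.
Local Arguments vl {Proc}. Local Arguments lck {Proc}. Local Arguments lock {Proc}.
Local Arguments unlock {Proc}. Local Arguments setlck {Proc}. Local Arguments setmrk {Proc}.
Local Arguments setnxt {Proc}. Local Arguments SC {Proc}. Local Arguments lstep {Proc}.
Local Arguments chain {Proc}. Local Arguments path {Proc}. Local Arguments on_main {Proc}.
Local Arguments NS1 {Proc}. Local Arguments NS2 {Proc}. Local Arguments NS3 {Proc}.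
Local Arguments NS4 {Proc}. Local Arguments NS5 {Proc}. Local Arguments sh {Proc}.
Local Arguments loc {Proc}. Local Arguments mkShared {Proc}.

Lemma vlt_irrefl v : ~ vlt v v.
Proof. destruct v; simpl; lia. Qed.

Lemma vlt_trans u v w : vlt u v -> vlt v w -> vlt u w.
Proof. destruct u, v, w; simpl; try tauto; lia. Qed.

Inductive reach {Proc} (s : Shared Proc) : Addr -> Addr -> Prop :=
| r_refl a : reach s a a
| r_step a b c : a <> T -> nxt s a = Some b -> reach s b c -> reach s a c.

Definition Gd {Proc} (s : Shared Proc) := forall a, act s a = true -> a <> T ->
  exists b, nxt s a = Some b /\ act s b = true /\ vlt (vl s a) (vl s b).

Record SInv {Proc} (s : Shared Proc) : Prop := {
 siH : act s H = true; siT : act s T = true; svH : vl s H = VNeg; svT : vl s T = VInf;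
 snT : nxt s T = None;
 sval : forall a, act s a = true -> a <> H -> a <> T -> exists n, vl s a = VNat n;
 sG : Gd s; sfin : exists fin, forall a, act s a = true -> In a fin;
 sreachT : forall a, act s a = true -> reach s a T;
 smrk : forall a, mrk s a = true -> act s a = true;
 smain : forall a, act s a = true -> mrk s a = false -> reach s H a }.

Lemma reach_trans {Proc} (s : Shared Proc) x y z : reach s x y -> reach s y z -> reach s x z.
Proof. induction 1; intros; auto. econstructor; eauto. Qed.

Lemma reach_val {Proc} (s : Shared Proc) : Gd s -> forall x y, reach s x y -> act s x = true ->
  act s y = true /\ (x = y \/ vlt (vl s x) (vl s y)).
Proof.
  intros G x y R. induction R as [|a b c Hat Hn R IHR]; intros Ha; auto.
  destruct (G a Ha Hat) as [b' [E [Ab V]]]. rewrite Hn in E. injection E as ->.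
  destruct (IHR Ab) as [Ac [->|V']]; split; auto; right; eauto using vlt_trans.
Qed.

Lemma reach_det {Proc} (s : Shared Proc) x y c : reach s x y -> x <> y -> nxt s x = Some c -> reach s c y.
Proof. intros R; inversion R; subst; intros; [congruence|]. congruence. Qed.

Lemma reach_ext {Proc} (s s' : Shared Proc) : (forall a, nxt s' a = nxt s a) ->
  forall x y, reach s x y -> reach s' x y.
Proof. intros E x y R; induction R; [constructor|econstructor; eauto; congruence]. Qed.

Lemma reach_same {Proc} (s s' : Shared Proc) x y : reach s x y ->
  (forall z, reach s x z -> reach s z y -> z <> y -> nxt s' z = nxt s z) -> reach s' x y.
Proof.
  induction 1 as [a|a b c Ha Hn R IH]; intros F; [constructor|].
  destruct (Nat.eq_dec a c) as [->|Hac]; [constructor|].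
  apply r_step with b; [exact Ha| |].
  - rewrite F; auto. constructor. econstructor; eauto.
  - apply IH. intros z R1 R2 Hz. apply F; auto. econstructor; eauto.
Qed.

Lemma SInv_ext {Proc} (s s' : Shared Proc) : SInv s -> (forall a, act s' a = act s a) ->
  (forall a, mrk s' a = mrk s a) -> (forall a, nxt s' a = nxt s a) -> (forall a, vl s' a = vl s a) -> SInv s'.
Proof.
  intros [] Ea Em En Ev.
  assert (R : forall x y, reach s x y -> reach s' x y) by (apply reach_ext; auto).
  constructor; try rewrite Ea; try rewrite Ev; try rewrite En; auto.
  - intros a. rewrite Ea, Ev; auto.
  - intros a. rewrite Ea. intros A B. destruct (sG0 a A B) as [b [? [? ?]]]. exists b.
    rewrite En, Ea, !Ev; auto.
  - destruct sfin0 as [f F]; exists f; intros a; rewrite Ea; auto.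
  - intros a; rewrite Ea; auto.
  - intros a; rewrite Em, Ea; auto.
  - intros a; rewrite Em, Ea; auto.
Qed.

Definition LInv {Proc} (s : Shared Proc) (P : Proc) (l : Local) : Prop :=
  act s (lpred l) = true /\ act s (lcurr l) = true /\
  match lpc l with
  | LL2 _ | LL31 _ => vlt (vl s (lcurr l)) (VNat (lx l))
  | LL32 _ => lpred l = lcurr l /\ vlt (vl s (lpred l)) (VNat (lx l))
  | LL4 _ => vlt (vl s (lpred l)) (vl s (lcurr l)) /\ vlt (vl s (lpred l)) (VNat (lx l))
  | LL5 _ | A12 | R22 => vlt (vl s (lpred l)) (VNat (lx l)) /\ vle (VNat (lx l)) (vl s (lcurr l))
  | A13 | R23 => vlt (vl s (lpred l)) (VNat (lx l)) /\ vle (VNat (lx l)) (vl s (lcurr l))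
      /\ lck s (lpred l) = Some P
  | A14 | R24 => vlt (vl s (lpred l)) (VNat (lx l)) /\ vle (VNat (lx l)) (vl s (lcurr l))
      /\ lck s (lpred l) = Some P /\ mrk s (lpred l) = false /\ nxt s (lpred l) = Some (lcurr l)
  | A15 => vlt (vl s (lpred l)) (VNat (lx l)) /\ vlt (VNat (lx l)) (vl s (lcurr l))
      /\ lck s (lpred l) = Some P /\ mrk s (lpred l) = false /\ nxt s (lpred l) = Some (lcurr l)
  | A16 => lck s (lpred l) = Some P
  | R25 => vlt (vl s (lpred l)) (VNat (lx l)) /\ VNat (lx l) = vl s (lcurr l)
      /\ lck s (lpred l) = Some P /\ mrk s (lpred l) = false /\ nxt s (lpred l) = Some (lcurr l)
  | R26 => vlt (vl s (lpred l)) (VNat (lx l)) /\ VNat (lx l) = vl s (lcurr l)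
      /\ lck s (lpred l) = Some P /\ lck s (lcurr l) = Some P /\ mrk s (lpred l) = false
      /\ nxt s (lpred l) = Some (lcurr l) /\ nxt s (lcurr l) = Some (ld l)
  | R27 => vlt (vl s (lpred l)) (VNat (lx l)) /\ VNat (lx l) = vl s (lcurr l)
      /\ lck s (lpred l) = Some P /\ lck s (lcurr l) = Some P /\ mrk s (lpred l) = false
      /\ nxt s (lpred l) = Some (lcurr l) /\ nxt s (lcurr l) = Some (ld l) /\ mrk s (lcurr l) = true
  | R28 => vlt (vl s (lpred l)) (VNat (lx l)) /\ VNat (lx l) = vl s (lcurr l)
      /\ lck s (lpred l) = Some P /\ lck s (lcurr l) = Some P /\ mrk s (lpred l) = false
  | _ => True
  end.

Ltac eqbs := repeat match goal with
  | |- context [Nat.eqb ?x ?y] => destruct (Nat.eqb_spec x y)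
  end.

Ltac interf := unfold LInv in *; simpl in *;
  match goal with HQ : context [lpc ?m] |- context [lpc ?m] => destruct (lpc m) end;
  unfold upd; eqbs; intuition congruence.

Lemma int_lock {Proc} (s : Shared Proc) a P Q m : LInv s Q m -> lck s a = None -> Q <> P ->
  LInv (lock s a P) Q m.
Proof. intros. interf. Qed.

Lemma int_unlock {Proc} (s : Shared Proc) a P Q m : LInv s Q m -> lck s a = Some P -> Q <> P ->
  LInv (unlock s a) Q m.
Proof. intros. interf. Qed.

Lemma int_mrk {Proc} (s : Shared Proc) a P Q m : LInv s Q m -> lck s a = Some P -> Q <> P ->
  LInv (setmrk s (upd (mrk s) a true)) Q m.
Proof. intros. interf. Qed.

Lemma int_nxt {Proc} (s : Shared Proc) a d P Q m : LInv s Q m -> lck s a = Some P -> Q <> P ->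
  LInv (setnxt s (upd (nxt s) a (Some d))) Q m.
Proof. intros. interf. Qed.

Lemma int_add {Proc} (s : Shared Proc) a p c x P Q m : LInv s Q m -> lck s p = Some P -> Q <> P ->
  act s a = false ->
  LInv (mkShared (upd (act s) a true) (mrk s) (upd (upd (nxt s) a (Some c)) p (Some a))
          (upd (vl s) a (VNat x)) (lck s)) Q m.
Proof. intros. interf. Qed.


Lemma vl_cases {Proc} (s : Shared Proc) a : SInv s -> act s a = true ->
  vl s a = VNeg \/ vl s a = VInf \/ exists n, vl s a = VNat n.
Proof.
  intros [] A. destruct (Nat.eq_dec a H) as [->|]; auto.
  destruct (Nat.eq_dec a T) as [->|]; auto.
Qed.

Lemma neT_of_vlt {Proc} (s : Shared Proc) a v : SInv s -> vlt (vl s a) v -> a <> T.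
Proof. intros SI V ->. rewrite (svT _ SI) in V. destruct v; simpl in V; auto. Qed.

Lemma own_pres {Proc} (s s' : Shared Proc) P l l' : SInv s -> LInv s P l ->
  lstep P s l s' l' -> LInv s' P l'.
Proof.
  intros SI HL Hst. destruct Hst; unfold LInv in *; simpl in *;
  try (match goal with E : lpc _ = _ |- _ => rewrite E in HL end); simpl in *.
  all: try (intuition congruence; fail).
  all: pose proof (siH _ SI) as AH; pose proof (svH _ SI) as VH; pose proof (snT _ SI) as NT.
  all: try (match goal with O : _ \/ _ |- _ => destruct O as [E|[E|E]]; rewrite E; simpl; intuition; fail end).
  all: try (rewrite VH; simpl; intuition; fail).
  all: try (unfold upd; eqbs; intuition congruence; fail).
  all: try (unfold vle in *; intuition congruence; fail).
  all: try (unfold SC in *; intuition congruence; fail).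
  - destruct HL as [A1 [A2 [E V]]]. rewrite E in *.
    destruct (sG _ SI (lcurr l) A2 (neT_of_vlt _ _ _ SI V)) as [b' [E' [Ab Vb]]].
    rewrite H0 in E'; injection E' as <-. auto.
  - destruct HL as [A1 [A2 _]]. split; [|split]; auto.
    destruct (vl_cases _ _ SI A2) as [E|[E|[k E]]]; rewrite E in *; simpl in *; unfold vle in *; simpl in *;
    try tauto. destruct (Nat.lt_trichotomy (lx l) k) as [Hk|[Hk|Hk]]; [exfalso; tauto| subst; exfalso; apply H0; right; split; congruence | exact Hk].
  - destruct HL as [A1 [A2 [V [E HH]]]]. unfold upd; eqbs; try congruence.
    + exfalso. match goal with e : lpred l = lcurr l |- _ => rewrite e, <- E in V end. exact (vlt_irrefl _ V).
    + intuition.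
  - destruct HL as [A1 [A2 _]]. destruct (Nat.eq_dec (lcurr l) T) as [E|E].
    + rewrite E in *; congruence.
    + destruct (sG _ SI _ A2 E) as [b' [E' [Ab Vb]]]. rewrite H0 in E'; injection E' as <-. auto.
Qed.

Lemma upd_eq {B} (f : Addr -> B) a b : upd f a b a = b.
Proof. unfold upd. now rewrite Nat.eqb_refl. Qed.
Lemma upd_ne {B} (f : Addr -> B) a b y : y <> a -> upd f a b y = f y.
Proof. unfold upd. intros N. destruct (Nat.eqb_spec y a); congruence. Qed.

Lemma sh_add {Proc} (s : Shared Proc) a p c x :
  SInv s -> act s a = false -> act s p = true -> act s c = true ->
  vlt (vl s p) (VNat x) -> vlt (VNat x) (vl s c) -> mrk s p = false -> nxt s p = Some c ->
  SInv (mkShared (upd (act s) a true) (mrk s) (upd (upd (nxt s) a (Some c)) p (Some a))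
          (upd (vl s) a (VNat x)) (lck s)).
Proof.
  intros SI Aa Ap Ac Vp Vc Mp Np.
  set (s' := mkShared _ _ _ _ _).
  assert (Hap : a <> p) by congruence. assert (Hac : a <> c) by congruence.
  assert (HaH : a <> H) by (intros ->; rewrite (siH _ SI) in Aa; discriminate).
  assert (HaT : a <> T) by (intros ->; rewrite (siT _ SI) in Aa; discriminate).
  assert (HpT : p <> T) by exact (neT_of_vlt _ _ _ SI Vp).
  assert (Vpc : vlt (vl s p) (vl s c)) by eauto using vlt_trans.
  assert (Hcp : c <> p) by (intros ->; exact (vlt_irrefl _ Vpc)).
  pose proof (sG _ SI) as G.
  assert (Nz : forall z, act s z = true -> z <> p -> nxt s' z = nxt s z).
  { intros z Az Hz. simpl. rewrite !upd_ne; congruence. }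
  assert (Rv : forall u v, reach s u v -> act s u = true -> act s v = true /\ (u = v \/ vlt (vl s u) (vl s v)))
    by (intros u v R Au; exact (reach_val s G u v R Au)).
  assert (C1 : forall y, reach s c y -> reach s' c y).
  { intros y R. apply reach_same with s; auto. intros z R1 R2 Hz.
    destruct (Rv _ _ R1 Ac) as [Az [E|E]]; apply Nz; auto; intros ->; subst; auto.
    apply (vlt_irrefl (vl s p)); eauto using vlt_trans. }
  assert (Npa : nxt s' p = Some a) by (simpl; apply upd_eq).
  assert (Nac : nxt s' a = Some c) by (simpl; rewrite upd_ne, upd_eq; auto).
  assert (Cpc : forall y, reach s c y -> reach s' p y).
  { intros y R. apply r_step with a; auto. apply r_step with c; auto. }
  assert (Cto : forall u, act s u = true -> reach s u p -> reach s' u p).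
  { intros u Au R. apply reach_same with s; auto. intros z R1 R2 Hz. apply Nz; auto.
    apply (Rv _ _ R1 Au). }
  assert (Cnot : forall u y, act s u = true -> reach s u y -> ~ reach s u p -> reach s' u y).
  { intros u y Au R NR. apply reach_same with s; auto. intros z R1 R2 Hz. apply Nz.
    apply (Rv _ _ R1 Au). intros ->; auto. }
  assert (RcT : reach s c T) by exact (sreachT _ SI c Ac).
  assert (AA : forall b, act s' b = true -> b = a \/ act s b = true).
  { intros b. simpl. unfold upd. destruct (Nat.eqb_spec b a); auto. }
  constructor; simpl.
  - rewrite upd_ne; auto. apply (siH _ SI).
  - rewrite upd_ne; auto. apply (siT _ SI).
  - rewrite upd_ne; auto. apply (svH _ SI).
  - rewrite upd_ne; auto. apply (svT _ SI).
  - rewrite !upd_ne; auto. apply (snT _ SI).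
  - intros b Ab HbH HbT. destruct (AA b Ab) as [->|Ab']; [rewrite upd_eq; eauto|].
    rewrite upd_ne by congruence. apply (sval _ SI); auto.
  - intros b Ab HbT. destruct (AA b Ab) as [->|Ab'].
    + exists c. split; [exact Nac|]. simpl. rewrite upd_eq, !upd_ne by auto. split; unfold upd; try destruct (Nat.eqb_spec c a); auto.
    + destruct (Nat.eq_dec b p) as [->|Hbp].
      * exists a. split; [exact Npa|]. simpl. rewrite !upd_eq, upd_ne by auto. auto.
      * destruct (G b Ab' HbT) as [d [Nd [Ad Vd]]]. exists d.
        split; [rewrite Nz; auto|]. simpl. rewrite !(upd_ne (vl s)) by congruence.
        unfold upd at 1; destruct (Nat.eqb_spec d a); auto.
  - destruct (sfin _ SI) as [f F]. exists (a :: f). intros b Ab.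
    destruct (AA b Ab) as [->|Ab']; simpl; auto.
  - intros b Ab. destruct (AA b Ab) as [->|Ab'].
    + apply r_step with c; auto.
    + destruct (classic (reach s b p)) as [Rb|Rb].
      * apply reach_trans with p; [apply Cto|apply Cpc]; auto.
      * apply Cnot; auto. apply (sreachT _ SI); auto.
  - intros b Mb. rewrite upd_ne. apply (smrk _ SI); auto. intros ->.
    rewrite (smrk _ SI a Mb) in Aa. discriminate.
  - assert (RHp : reach s' H p) by (apply Cto; [apply (siH _ SI)|apply (smain _ SI); auto]).
    intros b Ab Mb. destruct (AA b Ab) as [->|Ab'].
    + apply reach_trans with p; auto. apply r_step with a; auto. constructor.
    + destruct (classic (reach s p b)) as [Rb|Rb].
      * destruct (Nat.eq_dec p b) as [<-|Hpb]; auto.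
        apply reach_trans with p; auto. apply Cpc. eapply reach_det; eauto.
      * apply reach_same with s. apply (smain _ SI); auto. intros z R1 R2 Hz. apply Nz.
        apply (Rv _ _ R1 (siH _ SI)). intros ->; auto.
Qed.

Lemma sh_rem {Proc} (s : Shared Proc) p c d x :
  SInv s -> act s p = true -> act s c = true ->
  vlt (vl s p) (VNat x) -> VNat x = vl s c -> mrk s p = false -> nxt s p = Some c ->
  mrk s c = true -> nxt s c = Some d ->
  SInv (setnxt s (upd (nxt s) p (Some d))).
Proof.
  intros SI Ap Ac Vp Vc Mp Np Mc Nc.
  set (s' := setnxt _ _).
  assert (HpT : p <> T) by exact (neT_of_vlt _ _ _ SI Vp).
  assert (HcT : c <> T) by (intros ->; rewrite (svT _ SI) in Vc; discriminate).
  pose proof (sG _ SI) as G.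
  destruct (G c Ac HcT) as [d' [Nd [Ad Vcd]]]. rewrite Nc in Nd; injection Nd as <-.
  assert (Vpd : vlt (vl s p) (vl s d)) by (rewrite <- Vc in Vcd; eauto using vlt_trans).
  assert (Nz : forall z, z <> p -> nxt s' z = nxt s z).
  { intros z Hz. simpl. rewrite !upd_ne; congruence. }
  assert (Rv : forall u v, reach s u v -> act s u = true -> act s v = true /\ (u = v \/ vlt (vl s u) (vl s v)))
    by (intros u v R Au; exact (reach_val s G u v R Au)).
  assert (C1 : forall y, reach s d y -> reach s' d y).
  { intros y R. apply reach_same with s; auto. intros z R1 R2 Hz.
    destruct (Rv _ _ R1 Ad) as [Az [E|E]]; apply Nz; intros ->; subst.
    - exact (vlt_irrefl _ Vpd).
    - apply (vlt_irrefl (vl s p)); eauto using vlt_trans. }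
  assert (Npd : nxt s' p = Some d) by (simpl; apply upd_eq).
  assert (Cto : forall u, reach s u p -> reach s' u p).
  { intros u R. apply reach_same with s; auto. }
  assert (Cnot : forall u y, reach s u y -> ~ reach s u p -> reach s' u y).
  { intros u y R NR. apply reach_same with s; auto. intros z R1 R2 Hz. apply Nz.
    intros ->; auto. }
  constructor; simpl; try apply SI.
  - rewrite upd_ne; auto. apply (snT _ SI).
  - intros b Ab HbT. destruct (Nat.eq_dec b p) as [->|Hbp].
    + exists d. split; [exact Npd|]. auto.
    + destruct (G b Ab HbT) as [e [Ne [Ae Ve]]]. exists e. split; auto. rewrite Nz; auto.
  - intros b Ab. destruct (classic (reach s b p)) as [Rb|Rb].
    + apply reach_trans with p; [apply Cto; auto|]. apply r_step with d; auto.
      apply C1. apply (sreachT _ SI); auto.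
    + apply Cnot; auto. apply (sreachT _ SI); auto.
  - intros b Ab Mb. destruct (classic (reach s p b)) as [Rb|Rb].
    + destruct (Nat.eq_dec p b) as [<-|Hpb]; [apply Cto; apply (smain _ SI); auto|].
      apply reach_trans with p; [apply Cto; apply (smain _ SI); auto|].
      apply r_step with d; auto. apply C1.
      assert (Rcb : reach s c b) by (eapply reach_det; eauto).
      eapply reach_det; eauto. congruence.
    + apply reach_same with s. apply (smain _ SI); auto. intros z R1 R2 Hz. apply Nz.
      intros ->; auto.
Qed.

Lemma sh_mrk {Proc} (s : Shared Proc) c : SInv s -> act s c = true ->
  SInv (setmrk s (upd (mrk s) c true)).
Proof.
  intros SI Ac.
  assert (R : forall x y, reach s x y -> reach (setmrk s (upd (mrk s) c true)) x y)
    by (apply reach_ext; auto).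
  constructor; simpl; try exact (siH _ SI); try exact (siT _ SI); try exact (svH _ SI);
   try exact (svT _ SI); try exact (snT _ SI); try exact (sval _ SI); try exact (sG _ SI);
   try exact (sfin _ SI).
  - intros a Aa. apply R, (sreachT _ SI); auto.
  - intros a. unfold upd. destruct (Nat.eqb_spec a c); [congruence|apply (smrk _ SI)].
  - intros a Aa. unfold upd. destruct (Nat.eqb_spec a c); [congruence|]. intros M.
    apply R, (smain _ SI); auto.
Qed.

Lemma shared_pres {Proc} (s s' : Shared Proc) P l l' : SInv s -> LInv s P l ->
  lstep P s l s' l' -> SInv s'.
Proof.
  intros SI HL Hst. destruct Hst; unfold LInv in HL;
  try (match goal with E : lpc _ = _ |- _ => rewrite E in HL end);
  try exact SI;
  try (apply SInv_ext with s; auto; fail).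
  - destruct HL as [? [? [? [? [? [? ?]]]]]]. apply sh_add; auto.
  - destruct HL as [? [? ?]]. apply sh_mrk; auto.
  - destruct HL as [? [? [? [? [? [? [? [? [? ?]]]]]]]]]. eapply sh_rem; eauto.
Qed.

Lemma other_pres {Proc} (s s' : Shared Proc) P Q l l' m : SInv s -> LInv s P l -> LInv s Q m ->
  Q <> P -> lstep P s l s' l' -> LInv s' Q m.
Proof.
  intros SI HL HQ NQ Hst. destruct Hst; unfold LInv in HL;
  try (match goal with E : lpc _ = _ |- _ => rewrite E in HL end);
  try exact HQ.
  all: try (eapply int_lock; eauto; fail).
  all: try (eapply int_unlock; eauto; intuition; fail).
  - destruct HL as [? [? [? [? [? [? ?]]]]]]. eapply int_add; eauto.
  - destruct HL as [? [? [? [? [? [? ?]]]]]]. eapply int_mrk; eauto.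
  - destruct HL as [? [? [? [? [? [? ?]]]]]]. eapply int_nxt; eauto.
  - destruct HL as [A1 [A2 [V [E [L1 [L2 _]]]]]]. apply int_unlock with P; [eapply int_unlock; eauto| |auto].
    simpl. rewrite upd_ne; auto. intros e. rewrite e, <- E in V. exact (vlt_irrefl _ V).
Qed.


Definition Inv {Proc} (S : State Proc) := SInv (sh S) /\ forall Q, LInv (sh S) Q (loc S Q).

Lemma step_pres {Proc} (S S' : State Proc) P : Inv S -> step P S S' -> Inv S'.
Proof.
  intros [SI LI] [Hst Ho]. split.
  - eapply shared_pres; eauto.
  - intros Q. destruct (classic (Q = P)) as [->|NQ].
    + eapply own_pres; eauto.
    + rewrite Ho by auto. eapply other_pres; eauto.
Qed.

Lemma init_inv {Proc} (S : State Proc) : initial Proc S -> Inv S.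
Proof.
  intros [Ha [Hm [NH [NT [Nn [VH [VT [Vo [Hl Hloc]]]]]]]]].
  assert (AA : forall a, act (sh S) a = true -> a = H \/ a = T).
  { intros a. rewrite Ha. destruct (Nat.eqb_spec a H); destruct (Nat.eqb_spec a T); simpl; auto; discriminate. }
  assert (RHT : reach (sh S) H T) by (apply r_step with T; [discriminate|auto|constructor]).
  split.
  - constructor; auto.
    + intros a A ? ?. destruct (AA a A); subst; congruence.
    + intros a A ?. destruct (AA a A); subst; [|congruence]. exists T.
      rewrite VH, VT. repeat split; auto.
    + exists [H; T]. intros a A. destruct (AA a A); subst; simpl; auto.
    + intros a A. destruct (AA a A); subst; auto. constructor.
    + intros a M. rewrite Hm in M. discriminate.
    + intros a A _. destruct (AA a A); subst; auto. constructor.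
  - intros Q. destruct (Hloc Q) as [E1 [E2 E3]]. unfold LInv. rewrite E1, E2, E3, !Ha. auto.
Qed.

Lemma chain_app {Proc} (s : Shared Proc) : forall mid a b, chain s (a :: mid ++ [b]) ->
  reach s a b /\ forall y, In y (a :: mid ++ [b]) -> reach s a y /\ reach s y b.
Proof.
  induction mid as [|c mid IH]; intros a b Ch; simpl in *.
  - inversion Ch as [|? ? ? Hat Hn Hc]; subst.
    assert (R : reach s a b) by (apply r_step with b; auto; constructor).
    split; auto. intros y [<-|[<-|[]]]; split; auto; constructor.
  - inversion Ch as [|? ? ? Hat Hn Hc]; subst. destruct (IH c b Hc) as [R F].
    assert (R' : reach s a b) by (apply r_step with c; auto).
    split; auto. intros y [<-|Hy]; [split; auto; constructor|].
    destruct (F y Hy). split; auto. apply r_step with c; auto.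
Qed.

Lemma reach_chain {Proc} (s : Shared Proc) x y : reach s x y -> x <> y ->
  exists mid, chain s (x :: mid ++ [y]).
Proof.
  induction 1 as [|a b c Ha Hn R IH]; intros N; [congruence|].
  destruct (Nat.eq_dec b c) as [<-|Nbc].
  - exists []. simpl. constructor; auto. constructor.
  - destruct (IH Nbc) as [mid Ch]. exists (b :: mid). simpl. constructor; auto.
Qed.

Lemma chain_cat {Proc} (s : Shared Proc) : forall m1 x a m2 y, chain s (x :: m1 ++ [a]) ->
  chain s (a :: m2 ++ [y]) -> chain s (x :: (m1 ++ a :: m2) ++ [y]).
Proof.
  induction m1 as [|c m1 IH]; intros x a m2 y C1 C2; simpl in *.
  - inversion C1 as [|? ? ? Hat Hn Hc]; subst. constructor; auto.
  - inversion C1 as [|? ? ? Hat Hn Hc]; subst. constructor; [auto|auto|apply (IH c a m2 y Hc C2)].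
Qed.

Lemma chain_nodup {Proc} (s : Shared Proc) : Gd s -> forall l x, chain s (x :: l) ->
  act s x = true -> Forall (fun y => vlt (vl s x) (vl s y)) l /\ NoDup (x :: l).
Proof.
  intros G. induction l as [|b l IH]; intros x Ch Ax.
  - split; constructor; [intros []|constructor].
  - inversion Ch as [|? ? ? Hat Hn Hc]; subst. destruct (G x Ax Hat) as [b' [E [Ab V]]]. rewrite Hn in E.
    injection E as <-. destruct (IH b Hc Ab) as [F N]. split.
    + constructor; auto. eapply Forall_impl; [|exact F]. intros y Vy. eauto using vlt_trans.
    + constructor; auto. intros Hin. assert (F' : Forall (fun y => vlt (vl s x) (vl s y)) (b :: l)).
      { constructor; auto. eapply Forall_impl; [|exact F]. intros y Vy. eauto using vlt_trans. }
      rewrite Forall_forall in F'. exact (vlt_irrefl _ (F' x Hin)).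
Qed.

Lemma nodup_ne (a : Addr) mid b : NoDup (a :: mid ++ [b]) -> a <> b.
Proof. intros N ->. inversion N as [|? ? Hn Hd]; subst. apply Hn. apply in_or_app. right. left. auto. Qed.

Lemma main_of_reach {Proc} (s : Shared Proc) a : SInv s -> act s a = true ->
  reach s H a -> reach s a T -> on_main s a.
Proof.
  intros SI Aa R1 R2. pose proof (sG _ SI) as G. pose proof (siH _ SI) as AH.
  assert (HT : H <> T) by discriminate.
  assert (ND : forall mid, chain s (H :: mid ++ [T]) -> NoDup (H :: mid ++ [T]))
    by (intros mid C; apply (chain_nodup s G _ _ C AH)).
  destruct (Nat.eq_dec a H) as [->|NH].
  - destruct (reach_chain s _ _ R2 HT) as [mid C]. exists mid. repeat split; auto. left; auto.
  - destruct (Nat.eq_dec a T) as [->|NT].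
    + destruct (reach_chain s _ _ R1 HT) as [mid C]. exists mid. repeat split; auto.
      right. apply in_or_app. right. left. auto.
    + destruct (reach_chain s _ _ R1 (not_eq_sym NH)) as [m1 C1].
      destruct (reach_chain s _ _ R2 NT) as [m2 C2].
      pose proof (chain_cat s m1 H a m2 T C1 C2) as C.
      exists (m1 ++ a :: m2). repeat split; auto.
      right. apply in_or_app. left. apply in_or_app. right. left. auto.
Qed.

Lemma inv_normal {Proc} (S : State Proc) : Inv S -> normal S.
Proof.
  intros [SI LI]. pose proof (sG _ SI) as G.
  split; [|split; [|split; [|split]]].
  - unfold NS1. split; [apply SI|]. split; [apply SI|]. split; [apply SI|].
    split; [apply SI|]. split; [apply SI|]. split; [exact G|].
    split; [intros P; destruct (LI P) as [? [? _]]; auto|].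
    split; [apply SI|]. split.
    + intros a b Aa Ab [[m1 [N1 C1]] [m2 [N2 C2]]].
      pose proof (nodup_ne _ _ _ N1) as Nab.
      destruct (chain_app _ _ _ _ C1) as [R1 _]. destruct (chain_app _ _ _ _ C2) as [R2 _].
      destruct (reach_val _ G _ _ R1 Aa) as [_ [E1|V1]]; [congruence|].
      destruct (reach_val _ G _ _ R2 Ab) as [_ [E2|V2]]; [congruence|].
      exact (vlt_irrefl _ (vlt_trans _ _ _ V1 V2)).
    + intros a Aa NT. destruct (reach_chain _ _ _ (sreachT _ SI a Aa) NT) as [mid C].
      exists mid. split; auto. apply (chain_nodup _ G _ _ C Aa).
  - intros a. split.
    + intros Aa. destruct (mrk (sh S) a) eqn:M; [right; auto|left].
      apply main_of_reach; auto. apply (smain _ SI); auto. apply (sreachT _ SI); auto.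
    + intros [[mid [N [C Hin]]]|M]; [|apply (smrk _ SI); auto].
      destruct (chain_app _ _ _ _ C) as [_ F]. destruct (F a Hin) as [R _].
      apply (reach_val _ G _ _ R (siH _ SI)).
  - intros P. specialize (LI P). unfold LInv in LI. simpl.
    unfold is_locL2_L31, is_locL32, is_locL4, is_locL5.
    destruct (lpc (loc S P)); intuition; try (destruct H0 as [? [?|?]]; discriminate);
    repeat match goal with Hx : exists _, _ |- _ => destruct Hx end; try discriminate;
    repeat match goal with Hx : _ \/ _ |- _ => destruct Hx end; try discriminate.
  - intros P. specialize (LI P). unfold LInv in LI. simpl.
    destruct (lpc (loc S P)); simpl; intuition discriminate.
  - intros P. specialize (LI P). unfold LInv in LI. simpl.
    destruct (lpc (loc S P)); simpl; intuition discriminate.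
Qed.

Theorem theorem5p9 (Proc : Type) (n : nat) (S : nat -> State Proc) :
  history n S -> forall i, i <= n -> normal (S i).
Proof.
  intros [Hi Hs]. assert (K : forall i, i <= n -> Inv (S i)).
  { induction i as [|i IH]; intros Hle.
    - apply init_inv; auto.
    - destruct (Hs i ltac:(lia)) as [P St]. rewrite Nat.add_1_r in St.
      eapply step_pres; [apply IH; lia|exact St]. }
  intros i Hle. apply inv_normal, K, Hle.
Qed.
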